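(* Let $(X,\mathbb{F})$ be a non-autonomous system on a compact metric space and let $\Psi$ be a hyperspace admissible with $\mathbb{F}$ such that $\mathcal{F}(X)\subseteq\Psi$, endowed with any admissible hyperspace topology $\Delta$ (of hit-and-miss or hit-and-far-miss type). If the set of periodic points of $(X,\mathbb{F})$ is dense in $X$, then the set of periodic points of $(\Psi,\overline{\mathbb{F}})$ is dense in $(\Psi,\Delta)$.
   Context: $(X,d)$ is a compact metric space, $\mathbb{F}=(f_n)_{n\in\mathbb{N}}$ a sequence of continuous self-maps of $X$, and $\omega_n=f_n\circ f_{n-1}\circ\cdots\circ f_1$. A point $x$ is periodic for $\mathbb{F}$ if there is $n\in\mathbb{N}$ with $\omega_{nk}(x)=x$ for all $k\in\mathbb{N}$. $\mathcal{K}(X)$ denotes the non-empty compact subsets of $X$, $\mathcal{F}(X)$ the non-empty finite subsets. A hyperspace $\Psi\subseteq\mathcal{K}(X)$ is admissible with $\mathbb{F}$ if $\omega_k(A)\in\Psi$ for all $A\in\Psi$, $k\in\mathbb{N}$; the induced system $(\Psi,\overline{\mathbb{F}})$ is given by $\overline{f_n}(A)=f_n(A)$, so $\overline{\omega}_k(A)=\omega_k(A)$, and dynamical notions for it are defined as for $(X,\mathbb{F})$ with $\overline{\omega}_k$ in place of $\omega_k$ (so $A\in\Psi$ is periodic if $\overline{\omega}_{nk}(A)=A$ for all $k$, for some $n$). A hyperspace topology is admissible if $x\mapsto\{x\}$ is continuous; every admissible topology is of hit-and-miss type (subbasic sets $U^-=\{A: A\cap U\neq\emptyset\}$ for $U$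 open and $(E^c)^+=\{A: A\subseteq E^c\}$ for $E$ in a fixed family $\mathcal{C}$ of closed sets) or hit-and-far-miss type (with $(E^c)^{++}=\{A:\exists\varepsilon>0,\ S_\varepsilon(A)\subseteq E^c\}$ instead), and the induced maps are assumed continuous. *)

(* Defs.v *)
From Stdlib Require Import Reals List.
Open Scope R_scope.

(* Sets are predicates; hyperspace elements are sets of points. *)
Definition set (X : Type) := X -> Prop.

Record is_metric {X : Type} (d : X -> X -> R) : Prop := {
  metric_nonneg : forall x y, 0 <= d x y;
  metric_eq0 : forall x y, d x y = 0 <-> x = y;
  metric_sym : forall x y, d x y = d y x;
  metric_tri : forall x y z, d x z <= d x y + d y z }.

Section Metric.
Context {X : Type} (d : X -> X -> R).

Definition is_open (U : set X) : Prop :=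
  forall x, U x -> exists eps, 0 < eps /\ forall y, d x y < eps -> U y.

Definition is_closed (E : set X) : Prop := is_open (fun x => ~ E x).

Definition converges (u : nat -> X) (l : X) : Prop :=
  forall eps, 0 < eps -> exists N, forall n, (N <= n)%nat -> d (u n) l < eps.

(* (Sequential) compactness of a subset, appropriate for metric spaces. *)
Definition is_compact (K : set X) : Prop :=
  forall u : nat -> X, (forall n, K (u n)) ->
    exists (phi : nat -> nat) (l : X),
      (forall n, (phi n < phi (S n))%nat) /\ K l /\ converges (fun n => u (phi n)) l.

Definition compact_space : Prop := is_compact (fun _ => True).

Definition continuous (f : X -> X) : Prop :=
  forall x eps, 0 < eps -> exists delta, 0 < delta /\
    forall y, d x y < delta -> d (f x) (f y) < eps.

Definition dense (P : set X) : Prop :=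
  forall x eps, 0 < eps -> exists p, P p /\ d x p < eps.

Definition Kset (A : set X) : Prop := is_compact A /\ exists x, A x.

Definition Fset (A : set X) : Prop :=
  exists l : list X, l <> nil /\ forall x, A x <-> In x l.

Definition S_eps (eps : R) (A : set X) : set X :=
  fun y => exists x, A x /\ d x y < eps.

Definition hit (U : set X) : set (set X) := fun A => exists x, A x /\ U x.
Definition miss (E : set X) : set (set X) := fun A => forall x, A x -> ~ E x.
Definition far_miss (E : set X) : set (set X) :=
  fun A => exists eps, 0 < eps /\ forall y, S_eps eps A y -> ~ E y.

(* Basic open set determined by finitely many open sets Us (hit part)
   and finitely many E's from the family (miss part);
   far = false : hit-and-miss, far = true : hit-and-far-miss. *)
Definition basic (far : bool) (Us Es : list (set X)) : set (set X) :=
  fun A => (forall U, In U Us -> hit U A) /\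
           (forall E, In E Es -> if far then far_miss E A else miss E A).

(* Open sets of the hyperspace topology on K(X) generated by the subbase
   { U^- : U open } u { (E^c)^+ (resp. (E^c)^{++}) : E in C }. *)
Definition hyper_open (far : bool) (C : set (set X)) (W : set (set X)) : Prop :=
  forall A, Kset A -> W A ->
    exists Us Es, (forall U, In U Us -> is_open U) /\ (forall E, In E Es -> C E) /\
      basic far Us Es A /\
      forall B, Kset B -> basic far Us Es B -> W B.

(* Admissible hyperspace topology: C consists of closed sets and
   x |-> {x} is continuous. *)
Definition admissible_topology (far : bool) (C : set (set X)) : Prop :=
  (forall E, C E -> is_closed E) /\
  forall W, hyper_open far C W -> is_open (fun x => W (fun y => y = x)).

End Metric.

Definition image {X : Type} (f : X -> X) (A : set X) : set X :=
  fun y => exists x, A x /\ y = f x.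

Definition set_eq {X : Type} (A B : set X) : Prop := forall x, A x <-> B x.

(* Non-autonomous system F = (f_1, f_2, ...): here f n stands for f_{n+1}.
   omega f n = f_n o ... o f_1, omega f 0 = id. *)
Fixpoint omega {X : Type} (f : nat -> X -> X) (n : nat) (x : X) : X :=
  match n with
  | O => x
  | S m => f m (omega f m x)
  end.

Definition periodic {X : Type} (f : nat -> X -> X) (x : X) : Prop :=
  exists n, (1 <= n)%nat /\ forall k, (1 <= k)%nat -> omega f (n * k) x = x.

(* Induced system on hyperspace: omega-bar_k(A) = omega_k(A). *)
Definition hyper_periodic {X : Type} (f : nat -> X -> X) (A : set X) : Prop :=
  exists n, (1 <= n)%nat /\
    forall k, (1 <= k)%nat -> set_eq (image (omega f (n * k)) A) A.

Definition admissible_hyperspace {X : Type} (d : X -> X -> R)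
    (f : nat -> X -> X) (Psi : set (set X)) : Prop :=
  (forall A, Psi A -> Kset d A) /\
  forall A k, Psi A -> (1 <= k)%nat -> Psi (image (omega f k) A).

(* Main.v *)
Require Import Defs.
From Stdlib Require Import Reals List.
From Stdlib Require Import Lra Lia.
Open Scope R_scope.

Lemma core (X : Type) (d : X -> X -> R) (f : nat -> X -> X) (A : set X)
  (Good : X -> Prop) (x0 : X) :
  (forall x, A x -> exists delta, 0 < delta /\ forall p, d x p < delta -> Good p) ->
  dense d (periodic f) -> A x0 ->
  forall Us : list (set X), (forall U, In U Us -> is_open d U /\ hit U A) ->
  exists l : list X, l <> nil /\ (forall p, In p l -> Good p /\ periodic f p) /\
    forall U, In U Us -> exists p, In p l /\ U p.
Proof.
  intros HG Hd Hx0. induction Us as [|U Us IH]; intros HU.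
  - destruct (HG x0 Hx0) as [de [Hde Hp]].
    destruct (Hd x0 de Hde) as [p [Pp Dp]].
    exists (p :: nil). split; [discriminate|]. split.
    + intros q [<-|[]]. auto.
    + intros U [].
  - destruct IH as [l [Hl1 [Hl2 Hl3]]].
    { intros V HV; apply HU; simpl; auto. }
    destruct (HU U (or_introl eq_refl)) as [Uo [x [Ax Ux]]].
    destruct (Uo x Ux) as [e1 [He1 Hb]].
    destruct (HG x Ax) as [de [Hde Hp]].
    destruct (Hd x (Rmin e1 de) (Rmin_pos _ _ He1 Hde)) as [p [Pp Dp]].
    exists (p :: l). split; [discriminate|]. split.
    + intros q [<-|Hq]; auto. split; auto. apply Hp.
      pose proof (Rmin_r e1 de); lra.
    + intros V [<-|HV].
      * exists p; split; [left; auto|]. apply Hb. pose proof (Rmin_l e1 de); lra.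
      * destruct (Hl3 V HV) as [q [Hq Vq]]. exists q; split; [right|]; auto.
Qed.

Lemma period_list (X : Type) (f : nat -> X -> X) (l : list X) :
  (forall p, In p l -> periodic f p) ->
  exists N, (1 <= N)%nat /\ forall p, In p l -> forall k, (1 <= k)%nat -> omega f (N * k) p = p.
Proof.
  induction l as [|a l IH]; intros H.
  - exists 1%nat. split; [lia|]. intros p [].
  - destruct IH as [N [HN HNp]]. { intros p Hp; apply H; right; auto. }
    destruct (H a (or_introl eq_refl)) as [n [Hn Hnp]].
    exists (n * N)%nat. split; [nia|].
    intros p [<-|Hp] k Hk.
    + replace (n * N * k)%nat with (n * (N * k))%nat by ring. apply Hnp. nia.
    + replace (n * N * k)%nat with (N * (n * k))%nat by ring. apply HNp; auto. nia.
Qed.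

Lemma miss_delta (X : Type) (d : X -> X -> R) (A : set X) (x : X) :
  A x -> forall Es : list (set X), (forall E, In E Es -> is_closed d E /\ miss E A) ->
  exists delta, 0 < delta /\ forall p, d x p < delta -> forall E, In E Es -> ~ E p.
Proof.
  intros Ax. induction Es as [|E Es IH]; intros H.
  - exists 1; split; [lra|]. intros p _ E [].
  - destruct IH as [de [Hde Hp]]. { intros; apply H; right; auto. }
    destruct (H E (or_introl eq_refl)) as [Ec Em].
    destruct (Ec x (Em x Ax)) as [e [He Hb]].
    exists (Rmin e de). split; [apply Rmin_pos; auto|].
    intros p Dp E' [<-|HE'].
    + apply Hb. pose proof (Rmin_l e de); lra.
    + apply Hp; auto. pose proof (Rmin_r e de); lra.
Qed.

Lemma far_eps (X : Type) (d : X -> X -> R) (A : set X) :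
  forall Es : list (set X), (forall E, In E Es -> far_miss d E A) ->
  exists e, 0 < e /\ forall E, In E Es -> forall y, S_eps d e A y -> ~ E y.
Proof.
  induction Es as [|E Es IH]; intros H.
  - exists 1; split; [lra|]. intros E [].
  - destruct IH as [de [Hde Hp]]. { intros; apply H; right; auto. }
    destruct (H E (or_introl eq_refl)) as [e [He Hb]].
    exists (Rmin e de). split; [apply Rmin_pos; auto|].
    intros E' HE' y [x [Ax Dx]].
    destruct HE' as [<-|HE'].
    + apply Hb. exists x; split; auto. pose proof (Rmin_l e de); lra.
    + apply (Hp E' HE'). exists x; split; auto. pose proof (Rmin_r e de); lra.
Qed.

Theorem mainTheorem1 (X : Type) (d : X -> X -> R) (f : nat -> X -> X)
  (Psi : set (set X)) (far : bool) (C : set (set X)) :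
  is_metric d ->
  compact_space d ->
  (forall n, continuous d (f n)) ->
  admissible_hyperspace d f Psi ->
  (forall A, Fset A -> Psi A) ->
  admissible_topology d far C ->
  (* the induced maps are continuous for the hyperspace topology *)
  (forall n W, hyper_open d far C W -> hyper_open d far C (fun A => W (image (f n) A))) ->
  dense d (periodic f) ->
  forall W, hyper_open d far C W ->
    (exists A, Psi A /\ W A) ->
    exists B, Psi B /\ W B /\ hyper_periodic f B.
Proof.
  intros Hm _ _ [HPK _] HF [HC _] _ Hd W HW [A [PA WA]].
  pose proof (HPK A PA) as KA. destruct KA as [_ [x0 Ax0]].
  destruct (HW A (HPK A PA) WA) as [Us [Es [HUs [HEs [[Hhit Hmiss] HB]]]]].
  assert (HUs' : forall U, In U Us -> is_open d U /\ hit U A) by (intros; split; auto).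
  assert (Fin : forall (Good : X -> Prop),
    (forall x, A x -> exists delta, 0 < delta /\ forall p, d x p < delta -> Good p) ->
    (forall l : list X, (forall p, In p l -> Good p) -> forall E, In E Es ->
       if far then far_miss d E (fun y => In y l) else miss E (fun y => In y l)) ->
    exists B, Psi B /\ W B /\ hyper_periodic f B).
  { intros Good HG HM.
    destruct (core X d f A Good x0 HG Hd Ax0 Us HUs') as [l [Hl1 [Hl2 Hl3]]].
    assert (PB : Psi (fun y => In y l)).
    { apply HF. exists l. split; auto. intro; tauto. }
    exists (fun y => In y l). split; [auto|]. split.
    - apply HB; [apply (HPK _ PB)|]. split.
      + intros U HU. destruct (Hl3 U HU) as [p [Hp Up]]. exists p; auto.
      + apply HM. intros p Hp; apply Hl2; auto.
    - destruct (period_list X f l) as [N [HN HNp]]. { intros p Hp; apply Hl2; auto. }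
      exists N. split; auto. intros k Hk y. split.
      + intros [x [Hx ->]]. rewrite HNp; auto.
      + intros Hy. exists y. split; auto. rewrite HNp; auto. }
  destruct far.
  - destruct (far_eps X d A Es Hmiss) as [e [He He2]].
    apply (Fin (fun p => exists x, A x /\ d x p < e / 2)).
    + intros x Ax. exists (e/2). split; [lra|]. intros p Dp. exists x; auto.
    + intros l Hl E HE. exists (e/2). split; [lra|].
      intros y [p [Hp Dpy]]. destruct (Hl p Hp) as [x [Ax Dxp]].
      apply (He2 E HE). exists x. split; auto.
      pose proof (metric_tri d Hm x p y). lra.
  - apply (Fin (fun p => forall E, In E Es -> ~ E p)).
    + intros x Ax. apply (miss_delta X d A x Ax Es).
      intros E HE; split; [apply HC, HEs; auto | apply (Hmiss E HE)].
    + intros l Hl E HE y Hy. apply Hl; auto.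
Qed.
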